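(* Let $(\boldsymbol\Sigma,\sigma)$ be a primitive Markov subshift on a countable alphabet with associated set $\mathbb F$, and let $A\in C^0(\boldsymbol\Sigma)$ be bounded above, with summable variations ($\mathrm{Var}(A)<\infty$), and $\inf A|_{\bigcup_{i\in\mathbb F}[i]}>-\infty$. Then there exists a nonnegative, bounded, uniformly continuous function $u_A:\boldsymbol\Sigma\to\mathbb R_+$ with $A+u_A-u_A\circ\sigma\le\beta_A$, which is minimal in the sense that $u_A\le u$ for every nonnegative continuous sub-action $u$ of $A$, and which satisfies $\mathrm{Var}_k(u_A)\le\sum_{j\ge k}\mathrm{Var}_j(A)$ for all $k\ge1$.
   Context: Let $\mathbf M:\mathbb Z_+\times\mathbb Z_+\to\{0,1\}$ be a transition matrix. Put $\mathcal B_0=\{i:\mathbf M(i,j)=1\text{ for some }j\}$, $\mathcal B_n=\{i:\mathbf M(i,j)=1\text{ for some }j\in\mathcal B_{n-1}\}$. $\mathbf M$ is primitive if there exist $\mathbb F\subseteq\mathbb Z_+$ and an integer $K_0\ge0$ such that for all $i,j\in\bigcap_{n\ge0}\mathcal B_n$ there are $\ell_1,\dots,\ell_{K_0}\in\mathbb F$ with $\mathbf M(i,\ell_1)\mathbf M(\ell_1,\ell_2)\cdots\mathbf M(\ell_{K_0},j)=1$. $\boldsymbol\Sigma=\{\mathbf x\in\mathbb Z_+^{\mathbb Z_+}:\mathbf M(x_j,x_{j+1})=1\ \forall j\}$ with metric $d(\mathbf x,\mathbf y)=\lambda^{\min\{j:x_j\neq y_j\}}$, $\lambda\in(0,1)$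 fixed; $\sigma$ the left shift; $[i]=\{\mathbf x:x_0=i\}$. $C^0(\boldsymbol\Sigma)$ = continuous real functions. $\mathcal M_\sigma$ = $\sigma$-invariant Borel probabilities; $\beta_A=\sup_{\mu\in\mathcal M_\sigma}\int A\,d\mu$. $\mathrm{Var}_k(A)=\sup\{A(\mathbf x)-A(\mathbf y):d(\mathbf x,\mathbf y)\le\lambda^k\}$, $\mathrm{Var}(A)=\sum_{k\ge1}\mathrm{Var}_k(A)$. A sub-action for $A$ is a continuous $u$ with $A+u-u\circ\sigma\le\beta_A$ everywhere. *)

(* Defs.v *)
From Stdlib Require Import Reals List ClassicalEpsilon.
Import ListNotations.
Open Scope R_scope.

(** Transition matrix M : Z_+ x Z_+ -> {0,1}, encoded as a boolean matrix
    (true = 1). The alphabet Z_+ is encoded as nat. *)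

Fixpoint Bset (M : nat -> nat -> bool) (n : nat) (i : nat) : Prop :=
  match n with
  | O => exists j, M i j = true
  | S n' => exists j, Bset M n' j /\ M i j = true
  end.

Definition Binf (M : nat -> nat -> bool) (i : nat) : Prop := forall n, Bset M n i.

Definition primitive_with (M : nat -> nat -> bool) (F : nat -> Prop) (K0 : nat) : Prop :=
  forall i j, Binf M i -> Binf M j ->
    exists l : nat -> nat,
      l O = i /\ l (S K0) = j /\
      (forall k, (1 <= k <= K0)%nat -> F (l k)) /\
      (forall k, (k <= K0)%nat -> M (l k) (l (S k)) = true).

Definition Sigma (M : nat -> nat -> bool) : Type :=
  { x : nat -> nat | forall j, M (x j) (x (S j)) = true }.

Definition coord {M} (x : Sigma M) (j : nat) : nat := proj1_sig x j.

Definition shift {M} (x : Sigma M) : Sigma M :=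
  exist (fun y : nat -> nat => forall j, M (y j) (y (S j)) = true)
        (fun j => proj1_sig x (S j))
        (fun j => proj2_sig x (S j)).

(** d(x,y) <= lambda^k  iff  x_j = y_j for all j < k (for any fixed lambda in (0,1)). *)
Definition agree {M} (k : nat) (x y : Sigma M) : Prop :=
  forall j, (j < k)%nat -> coord x j = coord y j.

Definition continuous_S {M} (f : Sigma M -> R) : Prop :=
  forall x eps, 0 < eps -> exists k, forall y, agree k x y -> Rabs (f x - f y) < eps.

Definition unif_continuous_S {M} (f : Sigma M -> R) : Prop :=
  forall eps, 0 < eps -> exists k, forall x y, agree k x y -> Rabs (f x - f y) < eps.

Definition bounded_S {M} (f : Sigma M -> R) : Prop :=
  exists C, forall x, Rabs (f x) <= C.

Definition IsVar {M} (f : Sigma M -> R) (k : nat) (v : R) : Prop :=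
  is_lub (fun r => exists x y, agree k x y /\ r = f x - f y) v.

Definition is_open_S {M} (U : Sigma M -> Prop) : Prop :=
  forall x, U x -> exists k, forall y, agree k x y -> U y.

Inductive borel {M} : (Sigma M -> Prop) -> Prop :=
| borel_open : forall U, is_open_S U -> borel U
| borel_compl : forall E, borel E -> borel (fun x => ~ E x)
| borel_union : forall E : nat -> (Sigma M -> Prop),
    (forall n, borel (E n)) -> borel (fun x => exists n, E n x).

Definition is_prob_measure {M} (mu : (Sigma M -> Prop) -> R) : Prop :=
  (forall E, borel E -> 0 <= mu E) /\
  mu (fun _ => True) = 1 /\
  (forall E : nat -> (Sigma M -> Prop),
     (forall n, borel (E n)) ->
     (forall n m x, n <> m -> E n x -> E m x -> False) ->
     infinite_sum (fun n => mu (E n)) (mu (fun x => exists n, E n x))).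

Definition is_invariant {M} (mu : (Sigma M -> Prop) -> R) : Prop :=
  is_prob_measure mu /\
  (forall E, borel E -> mu (fun x => E (shift x)) = mu E).

(** Lebesgue integral of a nonnegative function: supremum of integrals of
    nonnegative simple functions below it. *)
Definition ind {M} (E : Sigma M -> Prop) (x : Sigma M) : R :=
  if excluded_middle_informative (E x) then 1 else 0.

Definition simple_val {M} (l : list (R * (Sigma M -> Prop))) (x : Sigma M) : R :=
  fold_right (fun p acc => fst p * ind (snd p) x + acc) 0 l.

Definition simple_int {M} (mu : (Sigma M -> Prop) -> R) (l : list (R * (Sigma M -> Prop))) : R :=
  fold_right (fun p acc => fst p * mu (snd p) + acc) 0 l.

Definition lower_simple_integrals {M} (mu : (Sigma M -> Prop) -> R) (g : Sigma M -> R) (r : R) : Prop :=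
  exists l : list (R * (Sigma M -> Prop)),
    Forall (fun p => 0 <= fst p /\ borel (snd p)) l /\
    (forall x, simple_val l x <= g x) /\
    r = simple_int mu l.

(** [integral_is mu A r]: A is bounded above and its integral w.r.t. mu is
    the finite real r, i.e. int A dmu = C - int (C - A) dmu = r. *)
Definition integral_is {M} (mu : (Sigma M -> Prop) -> R) (A : Sigma M -> R) (r : R) : Prop :=
  exists C, (forall x, A x <= C) /\
    is_lub (lower_simple_integrals mu (fun x => C - A x)) (C - r).

(** [le_beta A c] : c <= beta_A = sup_{mu invariant} int A dmu  (sup in [-oo,+oo]). *)
Definition le_beta {M} (A : Sigma M -> R) (c : R) : Prop :=
  forall c', c' < c -> exists mu r, is_invariant mu /\ integral_is mu A r /\ c' < r.

Definition sub_action {M} (A u : Sigma M -> R) : Prop :=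
  continuous_S u /\ forall x, le_beta A (A x + u x - u (shift x)).

(* Main.v *)
Require Import Defs.
From Stdlib Require Import Reals.
From Stdlib Require Import Lra Lia SeqProp ClassicalEpsilon Classical FunctionalExtensionality ProofIrrelevance.
Open Scope R_scope.

Fixpoint fsum (f : nat -> R) (n : nat) : R :=
  match n with O => 0 | S n' => fsum f n' + f n' end.

Lemma fsum_ext f g n : (forall i, (i < n)%nat -> f i = g i) -> fsum f n = fsum g n.
Proof. induction n; simpl; intros H; [reflexivity|]. rewrite IHn by (intros; apply H; lia). rewrite H by lia. reflexivity. Qed.

Lemma fsum_le f g n : (forall i, (i < n)%nat -> f i <= g i) -> fsum f n <= fsum g n.
Proof. induction n; simpl; intros H; [lra|]. assert (f n <= g n) by (apply H; lia). assert (fsum f n <= fsum g n) by (apply IHn; intros; apply H; lia). lra. Qed.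

Lemma fsum_plus f g n : fsum (fun i => f i + g i) n = fsum f n + fsum g n.
Proof. induction n; simpl; [lra|]. rewrite IHn. lra. Qed.

Lemma fsum_scal a f n : fsum (fun i => a * f i) n = a * fsum f n.
Proof. induction n; simpl; [lra|]. rewrite IHn. lra. Qed.

Lemma fsum_const a n : fsum (fun _ => a) n = INR n * a.
Proof. induction n; simpl fsum; [simpl; lra|]. rewrite IHn, S_INR. lra. Qed.

Lemma fsum_shift g n : fsum g (S n) = g O + fsum (fun i => g (S i)) n.
Proof. induction n; simpl in *; [lra|]. rewrite IHn. lra. Qed.

Lemma fsum_split g a b : fsum g (a + b) = fsum g a + fsum (fun j => g (a + j)%nat) b.
Proof. induction b; simpl; [rewrite Nat.add_0_r; lra|]. rewrite Nat.add_succ_r. simpl. rewrite IHb. lra. Qed.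

Lemma fsum_sum_f g n : fsum g (S n) = sum_f_R0 g n.
Proof. induction n; simpl in *; [lra|]. rewrite <- IHn. simpl. lra. Qed.

Lemma fsum_nonneg f n : (forall i, (i < n)%nat -> 0 <= f i) -> 0 <= fsum f n.
Proof. intros H. replace 0 with (fsum (fun _ => 0) n). apply fsum_le; auto. rewrite fsum_const; lra. Qed.

Lemma partial_le_lim g s : (forall i, 0 <= g i) -> infinite_sum g s -> forall n, fsum g n <= s.
Proof.
  intros Hg Hs n. destruct n as [|n]. simpl.
  - assert (H := growing_ineq (sum_f_R0 g) s). assert (sum_f_R0 g 0 <= s).
    { apply H. intro m. simpl. specialize (Hg (S m)). lra. exact Hs. }
    simpl in H0. specialize (Hg O). lra.
  - rewrite fsum_sum_f. apply growing_ineq; auto. intro m. simpl. specialize (Hg (S m)). lra.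
Qed.

Fixpoint itr {M} (n : nat) (x : Sigma M) : Sigma M :=
  match n with O => x | S n' => shift (itr n' x) end.

Lemma coord_itr {M} n (x : Sigma M) j : coord (itr n x) j = coord x (n + j).
Proof. revert j; induction n; intros j; [reflexivity|]. simpl. unfold coord in *. simpl. rewrite IHn. f_equal. lia. Qed.

Lemma sig_ext {M} (x y : Sigma M) : (forall j, coord x j = coord y j) -> x = y.
Proof.
  destruct x as [f hf], y as [g hg]; unfold coord; simpl; intros H.
  assert (f = g) by (apply functional_extensionality; auto). subst. f_equal. apply proof_irrelevance.
Qed.

Lemma itr_S' {M} n (x : Sigma M) : itr (S n) x = itr n (shift x).
Proof. apply sig_ext; intro j. rewrite !coord_itr. unfold coord; simpl. f_equal. Qed.

Fixpoint bsum {M} (f : Sigma M -> R) (n : nat) (y : Sigma M) : R :=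
  match n with O => 0 | S n' => f y + bsum f n' (shift y) end.

Lemma bsum_fsum {M} (f : Sigma M -> R) n y : bsum f n y = fsum (fun i => f (itr i y)) n.
Proof.
  revert y; induction n; intros y; [reflexivity|].
  rewrite fsum_shift. simpl bsum. rewrite IHn. f_equal. apply fsum_ext. intros i _. rewrite itr_S'. reflexivity.
Qed.

Lemma bsum_S_r {M} (f : Sigma M -> R) n y : bsum f (S n) y = bsum f n y + f (itr n y).
Proof. rewrite !bsum_fsum. reflexivity. Qed.

Lemma bsum_add {M} (f : Sigma M -> R) a b y : bsum f (a + b) y = bsum f a y + bsum f b (itr a y).
Proof.
  rewrite !bsum_fsum, fsum_split. f_equal. apply fsum_ext. intros i _.
  f_equal. apply sig_ext; intro j. rewrite !coord_itr. f_equal. lia.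
Qed.

Lemma bsum_sub {M} (f : Sigma M -> R) b n y : bsum (fun x => f x - b) n y = bsum f n y - INR n * b.
Proof. rewrite !bsum_fsum. induction n; simpl fsum; [simpl; lra|]. rewrite IHn, S_INR. lra. Qed.

Lemma agree_shift {M} k (x y : Sigma M) : agree (S k) x y -> agree k (shift x) (shift y).
Proof. intros H j Hj. unfold coord; simpl. apply (H (S j)). lia. Qed.

Lemma bsum_compare {M} (f : Sigma M -> R) (W : nat -> R)
  (HW : forall m, (1 <= m)%nat -> forall x y : Sigma M, agree m x y -> f x - f y <= W m) k :
  forall n y y', agree (n + k) y y' -> bsum f n y - bsum f n y' <= fsum (fun j => W (k + 1 + j)%nat) n.
Proof.
  induction n; intros y y' H; simpl; [lra|].
  assert (h1 := HW (S n + k)%nat ltac:(lia) y y' H).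
  assert (h2 := IHn (shift y) (shift y') (agree_shift _ _ _ H)).
  replace (k + 1 + n)%nat with (S n + k)%nat by lia. lra.
Qed.

Lemma Binf_coord {M} (x : Sigma M) j : Binf M (coord x j).
Proof.
  intro n. revert j. induction n; intros j; simpl.
  - exists (coord x (S j)). apply (proj2_sig x).
  - exists (coord x (S j)). split; auto. apply (proj2_sig x).
Qed.

Lemma ind_t {M} (E : Sigma M -> Prop) x : E x -> Defs.ind E x = 1.
Proof. unfold Defs.ind; destruct excluded_middle_informative; tauto. Qed.
Lemma ind_f {M} (E : Sigma M -> Prop) x : ~ E x -> Defs.ind E x = 0.
Proof. unfold Defs.ind; destruct excluded_middle_informative; tauto. Qed.
Lemma ind_nn {M} (E : Sigma M -> Prop) x : 0 <= Defs.ind E x.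
Proof. unfold Defs.ind; destruct excluded_middle_informative; lra. Qed.

Lemma inf_sum_ind {M} (E : nat -> Sigma M -> Prop) w
  (Hd : forall n m x, n <> m -> E n x -> E m x -> False) :
  infinite_sum (fun n => Defs.ind (E n) w) (Defs.ind (fun x => exists n, E n x) w).
Proof.
  destruct (classic (exists n, E n w)) as [[m0 Hm0]|Hn].
  - rewrite ind_t by eauto.
    assert (Hg : forall n, Defs.ind (E n) w = if Nat.eq_dec n m0 then 1 else 0).
    { intro n. destruct (Nat.eq_dec n m0). subst. apply ind_t; auto.
      apply ind_f. intro. eapply Hd; eauto. }
    assert (Hs : forall N, sum_f_R0 (fun n => Defs.ind (E n) w) N = if Nat.leb m0 N then 1 else 0).
    { induction N; cbn [sum_f_R0]; rewrite Hg.
      - destruct (Nat.eq_dec 0 m0); destruct m0; simpl; try (exfalso; lia); reflexivity.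
      - rewrite IHN. destruct (Nat.eq_dec (S N) m0) as [e|ne].
        + subst. destruct (Nat.leb_spec (S N) N); [lia|]. destruct (Nat.leb_spec (S N) (S N)); [lra|lia].
        + destruct (Nat.leb_spec m0 N); destruct (Nat.leb_spec m0 (S N)); try lra; exfalso; lia. }
    intros eps Heps. exists m0. intros n Hn. rewrite Hs.
    rewrite (proj2 (Nat.leb_le m0 n)) by lia. unfold R_dist. rewrite Rminus_diag, Rabs_R0. lra.
  - rewrite ind_f by auto.
    assert (Hs : forall N, sum_f_R0 (fun n => Defs.ind (E n) w) N = 0).
    { induction N; simpl; rewrite ind_f; try lra; intro; apply Hn; eauto. }
    intros eps Heps. exists O. intros n _. rewrite Hs. unfold R_dist. rewrite Rminus_diag, Rabs_R0. lra.
Qed.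

Lemma inf_sum_fsum (f : nat -> nat -> R) (L : nat -> R) p :
  (forall i, infinite_sum (fun m => f m i) (L i)) ->
  infinite_sum (fun m => fsum (f m) p) (fsum L p).
Proof.
  intros H. induction p.
  - simpl. intros eps Heps. exists O. intros n _.
    assert (sum_f_R0 (fun _ => 0) n = 0) by (induction n; simpl; lra).
    simpl. rewrite H0. unfold R_dist. rewrite Rminus_diag, Rabs_R0. lra.
  - simpl. assert (Hc := CV_plus _ _ _ _ IHp (H p)).
    intros eps Heps. destruct (Hc eps Heps) as [N HN]. exists N. intros n Hn.
    rewrite sum_plus. apply HN; auto.
Qed.

Lemma inf_sum_scal (g : nat -> R) l a : infinite_sum g l -> infinite_sum (fun n => a * g n) (a * l).
Proof.
  intros H. assert (Hc : Un_cv (fun _ => a) a).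
  { intros eps Heps. exists O. intros. unfold R_dist. rewrite Rminus_diag, Rabs_R0. lra. }
  assert (Hm := CV_mult _ _ _ _ Hc H). intros eps Heps. destruct (Hm eps Heps) as [N HN].
  exists N. intros n Hn.
  replace (sum_f_R0 (fun n0 => a * g n0) n) with (a * sum_f_R0 g n). apply HN; auto.
  clear. induction n; simpl; [ring|]. rewrite <- IHn; ring.
Qed.

Definition pmu {M} (z : Sigma M) (p : nat) (E : Sigma M -> Prop) : R :=
  / INR p * fsum (fun i => Defs.ind E (itr i z)) p.

Lemma pmu_inv {M} (z : Sigma M) p : (1 <= p)%nat -> itr p z = z -> is_invariant (pmu z p).
Proof.
  intros Hp Hz. assert (HP : 0 < INR p) by (apply lt_0_INR; lia).
  split; [split; [|split]|].
  - intros E _. unfold pmu. apply Rmult_le_pos. left; apply Rinv_0_lt_compat; auto.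
    apply fsum_nonneg. intros; apply ind_nn.
  - unfold pmu. rewrite (fsum_ext _ (fun _ => 1)). rewrite fsum_const. field. lra.
    intros; apply ind_t; auto.
  - intros E _ Hd. unfold pmu. apply inf_sum_scal.
    apply (inf_sum_fsum (fun m i => Defs.ind (E m) (itr i z)) (fun i => Defs.ind (fun x => exists n, E n x) (itr i z))).
    intro i. apply inf_sum_ind; auto.
  - intros E _. unfold pmu. f_equal.
    set (g := fun i => Defs.ind E (itr i z)).
    change (fsum (fun i => g (S i)) p = fsum g p).
    assert (H := fsum_shift g p). cbn [fsum] in H.
    assert (g p = g O) by (unfold g; rewrite Hz; reflexivity). lra.
Qed.

Lemma pmu_simple {M} (z : Sigma M) p l :
  simple_int (pmu z p) l = / INR p * fsum (fun i => simple_val l (itr i z)) p.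
Proof.
  induction l as [|[a E] l IH]; simpl.
  - rewrite fsum_const. lra.
  - rewrite IH. unfold pmu. rewrite fsum_plus, fsum_scal. simpl. lra.
Qed.

Definition MeasSet {M} (A : Sigma M -> R) (r : R) : Prop :=
  exists mu, is_invariant mu /\ integral_is mu A r.

Lemma periodic_meas {M} (A : Sigma M -> R) (HAup : exists C, forall x, A x <= C)
  (z : Sigma M) p : (1 <= p)%nat -> itr p z = z ->
  exists r, MeasSet A r /\ bsum A p z / INR p <= r.
Proof.
  intros Hp Hz. destruct HAup as [C HC]. assert (HP : 0 < INR p) by (apply lt_0_INR; lia).
  set (Lset := lower_simple_integrals (pmu z p) (fun x => C - A x)).
  set (Bd := / INR p * fsum (fun i => C - A (itr i z)) p).
  assert (Hub : forall r, Lset r -> r <= Bd).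
  { intros r [l [_ [Hl ->]]]. rewrite pmu_simple. unfold Bd. apply Rmult_le_compat_l.
    left; apply Rinv_0_lt_compat; auto. apply fsum_le. intros; apply Hl. }
  assert (Hne : exists r, Lset r).
  { exists 0. exists nil. repeat split; auto. intros x; simpl. specialize (HC x). lra. }
  destruct (completeness Lset ltac:(exists Bd; intros r Hr; apply Hub; auto) Hne) as [L0 HL0].
  exists (C - L0). split.
  - exists (pmu z p). split. apply pmu_inv; auto. exists C. split; auto.
    replace (C - (C - L0)) with L0 by ring. exact HL0.
  - assert (L0 <= Bd) by (apply HL0; intros r Hr; apply Hub; auto).
    unfold Bd in H. rewrite (fsum_plus (fun _ => C) (fun i => - A (itr i z))) in H.
    rewrite fsum_const in H.
    rewrite (fsum_ext _ (fun i => -1 * A (itr i z))) in H by (intros; ring).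
    rewrite fsum_scal, <- bsum_fsum in H.
    replace (/ INR p * (INR p * C + -1 * bsum A p z)) with (C - bsum A p z / INR p) in H by (field; lra).
    lra.
Qed.

Lemma periodic_point {M} (F : nat -> Prop) (y : Sigma M) n K0 (l : nat -> nat) :
  (1 <= n)%nat -> l O = coord y (n - 1) -> l (S K0) = coord y O ->
  (forall k, (1 <= k <= K0)%nat -> F (l k)) ->
  (forall k, (k <= K0)%nat -> M (l k) (l (S k)) = true) ->
  exists z : Sigma M, itr (n + K0) z = z /\ agree n y z /\
    forall i, (i < K0)%nat -> F (coord (itr (n + i) z) O).
Proof.
  intros Hn Hl0 HlK HF HMl.
  set (p := (n + K0)%nat).
  set (w := fun i => if Nat.ltb i n then coord y i else l (i - n + 1)%nat).
  assert (Hp : p <> O) by (unfold p; lia).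
  assert (Hw : forall r, (r < p)%nat -> M (w r) (w ((r + 1) mod p)) = true).
  { intros r Hr. unfold w.
    destruct (Nat.eq_dec (r + 1) p) as [e|ne].
    - rewrite e, Nat.Div0.mod_same. destruct (Nat.ltb_spec 0 n); [|lia].
      rewrite <- HlK.
      destruct (Nat.ltb_spec r n).
      + assert (K0 = O) by (unfold p in e; lia). subst K0.
        replace r with (n - 1)%nat by (unfold p in e; lia). rewrite <- Hl0. apply HMl. lia.
      + replace (r - n + 1)%nat with K0 by (unfold p in e; lia). apply HMl. lia.
    - rewrite Nat.mod_small by lia.
      destruct (Nat.ltb_spec r n); destruct (Nat.ltb_spec (r + 1) n).
      + replace (r + 1)%nat with (S r) by lia. apply (proj2_sig y).
      + replace (r + 1 - n + 1)%nat with 1%nat by lia. replace r with (n - 1)%nat by lia.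
        rewrite <- Hl0. apply HMl. lia.
      + lia.
      + replace (r + 1 - n + 1)%nat with (S (r - n + 1)) by lia. apply HMl. unfold p in Hr. lia. }
  assert (Hz : forall j, M (w (j mod p)) (w (S j mod p)) = true).
  { intro j. replace (S j) with (j + 1)%nat by lia. rewrite <- Nat.Div0.add_mod_idemp_l.
    apply Hw. apply Nat.mod_upper_bound; auto. }
  exists (exist _ (fun j => w (j mod p)) Hz). split; [|split].
  - apply sig_ext. intro j. rewrite coord_itr. unfold coord; cbn [proj1_sig].
    replace (p + j)%nat with (j + 1 * p)%nat by lia. rewrite Nat.Div0.mod_add. reflexivity.
  - intros j Hj. unfold coord; cbn [proj1_sig]. rewrite Nat.mod_small by (unfold p; lia). unfold w.
    destruct (Nat.ltb_spec j n); [reflexivity|lia].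
  - intros i Hi. rewrite coord_itr. unfold coord; cbn [proj1_sig]. rewrite Nat.mod_small by (unfold p; lia).
    unfold w. destruct (Nat.ltb_spec (n + i + 0) n); [lia|]. apply HF. lia.
Qed.

Lemma extend_point {M} (y x x' : Sigma M) n k : (1 <= k)%nat -> itr n y = x -> agree k x x' ->
  exists y' : Sigma M, itr n y' = x' /\ agree (n + k) y y'.
Proof.
  intros Hk Hy Ha.
  set (f := fun j => if Nat.ltb j n then coord y j else coord x' (j - n)).
  assert (Hf : forall j, M (f j) (f (S j)) = true).
  { intro j. unfold f. destruct (Nat.ltb_spec j n); destruct (Nat.ltb_spec (S j) n).
    - apply (proj2_sig y).
    - replace (S j - n)%nat with O by lia. rewrite <- Ha by lia. rewrite <- Hy, coord_itr.
      replace (n + 0)%nat with (S j) by lia. apply (proj2_sig y).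
    - lia.
    - replace (S j - n)%nat with (S (j - n)) by lia. apply (proj2_sig x'). }
  exists (exist _ f Hf). split.
  - apply sig_ext. intro j. rewrite coord_itr. unfold coord at 1; cbn [proj1_sig]. unfold f.
    destruct (Nat.ltb_spec (n + j) n); [lia|]. f_equal. lia.
  - intros j Hj. unfold coord at 2; cbn [proj1_sig]. unfold f. destruct (Nat.ltb_spec j n); [reflexivity|].
    rewrite <- Ha by lia. rewrite <- Hy, coord_itr. f_equal. lia.
Qed.

Lemma itr_add {M} a b (x : Sigma M) : itr b (itr a x) = itr (a + b) x.
Proof. apply sig_ext; intro j. rewrite !coord_itr. f_equal. lia. Qed.

Lemma bsum_lower {M} (f : Sigma M -> R) c m w : (forall i, (i < m)%nat -> c <= f (itr i w)) -> INR m * c <= bsum f m w.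
Proof. intros H. rewrite bsum_fsum, <- fsum_const. apply fsum_le. auto. Qed.

Lemma agree_sym {M} k (x y : Sigma M) : agree k x y -> agree k y x.
Proof. intros H j Hj. symmetry. auto. Qed.

Theorem mainTheorem6
  (M : nat -> nat -> bool) (F : nat -> Prop) (K0 : nat)
  (HM : primitive_with M F K0)
  (A : Sigma M -> R)
  (HAc : continuous_S A)
  (HAup : exists C, forall x, A x <= C)
  (HAvar : exists V : nat -> R,
      (forall k, (1 <= k)%nat -> IsVar A k (V k)) /\
      exists s, infinite_sum (fun n => V (S n)) s)
  (HAinf : exists c, forall x : Sigma M, F (coord x 0) -> c <= A x) :
  exists uA : Sigma M -> R,
    (forall x, 0 <= uA x) /\
    bounded_S uA /\
    unif_continuous_S uA /\
    sub_action A uA /\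
    (forall u : Sigma M -> R, sub_action A u -> (forall x, 0 <= u x) ->
       forall x, uA x <= u x) /\
    (forall V : nat -> R, (forall k, (1 <= k)%nat -> IsVar A k (V k)) ->
       forall k, (1 <= k)%nat ->
       forall t, infinite_sum (fun n => V (k + n)%nat) t ->
       exists v, IsVar uA k v /\ v <= t).
Proof.
  destruct HAvar as [V0 [HV0 [s Hs]]].
  destruct HAup as [Ca HCa].
  destruct HAinf as [c Hc].
  assert (Hx0 : exists x0 : Sigma M, True).
  { apply NNPP; intro Hn. destruct (HV0 1%nat ltac:(lia)) as [_ Hl].
    assert (V0 1%nat <= V0 1%nat - 1). apply Hl. intros r [x [y _]]. exfalso; apply Hn; eauto. lra. }
  destruct Hx0 as [x0 _].
  assert (HW : forall m, (1 <= m)%nat -> forall x y : Sigma M, agree m x y -> A x - A y <= V0 m).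
  { intros m Hm x y Ha. apply (proj1 (HV0 m Hm)). eauto. }
  assert (HV0p : forall m, (1 <= m)%nat -> 0 <= V0 m).
  { intros m Hm. assert (H := HW m Hm x0 x0 (fun _ _ => eq_refl)). lra. }
  assert (Hpart : forall n, fsum (fun j => V0 (S j)) n <= s).
  { apply partial_le_lim; auto. intro i. apply HV0p. lia. }
  assert (Hper : forall (y : Sigma M) n, (1 <= n)%nat -> exists z : Sigma M, itr (n + K0) z = z /\ agree n y z /\
            forall i, (i < K0)%nat -> F (coord (itr (n + i) z) O)).
  { intros y n Hn. destruct (HM (coord y (n - 1)) (coord y 0) (Binf_coord _ _) (Binf_coord _ _)) as [l [H1 [H2 [H3 H4]]]].
    apply (periodic_point F y n K0 l); auto; lia. }
  assert (HMne : exists r, MeasSet A r).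
  { destruct (Hper x0 1%nat ltac:(lia)) as [z [Hz _]].
    destruct (periodic_meas A (ex_intro _ Ca HCa) z (1 + K0) ltac:(lia) Hz) as [r [Hr _]]. eauto. }
  assert (HMb : forall r, MeasSet A r -> r <= Ca).
  { intros r [mu [[[Hpos [H1 _]] _] [C [HC Hlub]]]].
    destruct (Rle_dec C Ca).
    - assert (0 <= C - r). { apply Hlub. exists nil. repeat split; auto. intros x; simpl. specialize (HC x). lra. }
      lra.
    - assert (C - Ca <= C - r).
      { apply Hlub. exists (cons (C - Ca, fun _ : Sigma M => True) nil). split; [|split].
        - constructor; [|constructor]. simpl. split; [lra|]. apply borel_open. intros x _. exists O. auto.
        - intros x. simpl. rewrite ind_t by auto. specialize (HCa x). lra.
        - simpl. rewrite H1. ring. }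
      lra. }
  destruct (completeness (MeasSet A) ltac:(exists Ca; intros r Hr; apply HMb; auto) HMne) as [beta Hbeta].
  assert (Hbper : forall z p, (1 <= p)%nat -> itr p z = z -> bsum A p z <= INR p * beta).
  { intros z p Hp Hz. destruct (periodic_meas A (ex_intro _ Ca HCa) z p Hp Hz) as [r [Hr Hle]].
    assert (r <= beta) by (apply Hbeta; auto).
    assert (0 < INR p) by (apply lt_0_INR; lia).
    assert (bsum A p z / INR p <= beta) by lra.
    apply (Rmult_le_compat_l (INR p)) in H1; [|lra]. field_simplify in H1; lra. }
  assert (Hlb : forall c0, le_beta A c0 <-> c0 <= beta).
  { intros c0; split.
    - intros H. destruct (Rle_dec c0 beta) as [|hn]; auto. exfalso.
      destruct (H beta ltac:(lra)) as [mu [r [Hi [Hint Hr]]]].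
      assert (r <= beta) by (apply Hbeta; exists mu; auto). lra.
    - intros H c' Hc'. apply NNPP; intro Hn.
      assert (beta <= c').
      { apply Hbeta. intros r [mu [Hi Hint]]. destruct (Rle_dec r c'); auto. exfalso; apply Hn.
        exists mu, r. split; [exact Hi|split; [exact Hint|]]. apply Rnot_le_lt; auto. }
      lra. }
  set (phi := fun x => A x - beta).
  set (U := fun (x : Sigma M) r => exists n y, itr n y = x /\ r = bsum phi n y).
  set (B := Rmax 0 (INR K0 * (beta - c) + s)).
  assert (HUb : forall x r, U x r -> r <= B).
  { intros x r [n [y [Hy ->]]]. destruct n as [|n].
    - simpl. apply Rmax_l.
    - eapply Rle_trans; [|apply Rmax_r].
      destruct (Hper y (S n) ltac:(lia)) as [z [Hz [Hag HF]]].
      assert (h1 := Hbper z (S n + K0)%nat ltac:(lia) Hz).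
      rewrite bsum_add in h1.
      assert (h2 : INR K0 * c <= bsum A K0 (itr (S n) z)).
      { apply bsum_lower. intros i Hi. rewrite itr_add. apply Hc. apply HF; auto. }
      assert (h3 := bsum_compare A V0 HW O (S n) y z ltac:(rewrite Nat.add_0_r; auto)).
      assert (h4 := Hpart (S n)).
      rewrite (fsum_ext _ (fun j => V0 (S j))) in h3 by (intros; f_equal; lia).
      unfold phi. rewrite bsum_sub. rewrite plus_INR in h1. nra. }
  assert (HUne : forall x, exists r, U x r).
  { intros x. exists 0. exists O, x. split; reflexivity. }
  set (uA := fun x => proj1_sig (completeness (U x) ltac:(exists B; intros r Hr; eapply HUb; eauto) (HUne x))).
  assert (HuA : forall x, is_lub (U x) (uA x)).
  { intros x. unfold uA. destruct completeness; auto. }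
  assert (HuA0 : forall x, 0 <= uA x).
  { intros x. apply (HuA x). exists O, x. split; reflexivity. }
  assert (HuAB : forall x, uA x <= B).
  { intros x. apply (HuA x). intros r Hr. eapply HUb; eauto. }
  assert (Hdiff : forall (W : nat -> R) k T, (1 <= k)%nat ->
            (forall m, (1 <= m)%nat -> forall x y : Sigma M, agree m x y -> A x - A y <= W m) ->
            (forall n, fsum (fun j => W (k + 1 + j)%nat) n <= T) ->
            forall x x', agree k x x' -> uA x <= uA x' + T).
  { intros W k T Hk HWW HT x x' Ha.
    assert (uA x <= uA x' + T -> uA x <= uA x' + T) by auto. apply H.
    apply (HuA x). intros r [n [y [Hy ->]]].
    destruct (extend_point y x x' n k Hk Hy Ha) as [y' [Hy' Hag]].
    assert (HWp : forall m, (1 <= m)%nat -> forall x y : Sigma M, agree m x y -> phi x - phi y <= W m).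
    { intros m Hm a b Hab. unfold phi. assert (HH := HWW m Hm a b Hab). lra. }
    assert (h1 := bsum_compare phi W HWp k n y y' Hag).
    assert (h2 : bsum phi n y' <= uA x'). { apply (HuA x'). exists n, y'. auto. }
    specialize (HT n). lra. }
  assert (Hunif : unif_continuous_S uA).
  { intros eps Heps. destruct (Hs eps Heps) as [N HN]. specialize (HN N (le_n _)).
    unfold R_dist in HN. rewrite <- fsum_sum_f in HN.
    set (T := s - fsum (fun j => V0 (S j)) (S N)).
    assert (HT : forall n, fsum (fun j => V0 (S N + 1 + j)%nat) n <= T).
    { intros n. unfold T. assert (H := fsum_split (fun j => V0 (S j)) (S N) n).
      rewrite (fsum_ext (fun j => V0 (S (S N + j))) (fun j => V0 (S N + 1 + j)%nat)) in H by (intros; f_equal; lia).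
      specialize (Hpart (S N + n)%nat). lra. }
    assert (T < eps).
    { unfold T. assert (fsum (fun j => V0 (S j)) (S N) <= s) by auto.
      rewrite Rabs_left1 in HN by lra. lra. }
    exists (S N). intros x y Ha.
    assert (h1 := Hdiff V0 (S N) T ltac:(lia) HW HT x y Ha).
    assert (h2 := Hdiff V0 (S N) T ltac:(lia) HW HT y x (agree_sym _ _ _ Ha)).
    apply Rabs_def1; lra. }
  assert (Hcont : continuous_S uA).
  { intros x eps Heps. destruct (Hunif eps Heps) as [k Hk]. exists k. intros y Ha. apply Hk; auto. }
  exists uA. split; [auto|]. split; [|split; [auto|split; [|split]]].
  - exists B. intros x. rewrite Rabs_right by (apply Rle_ge; auto). auto.
  - split; auto. intros x. apply Hlb.
    assert (uA x <= uA (shift x) - phi x).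
    { apply (HuA x). intros r [n [y [Hy ->]]].
      assert (bsum phi (S n) y <= uA (shift x)).
      { apply (HuA (shift x)). exists (S n), y. split; auto. simpl. rewrite Hy. reflexivity. }
      rewrite bsum_S_r, Hy in H. lra. }
    unfold phi in H. lra.
  - intros u [_ Hu] Hu0 x. apply (HuA x). intros r [n [y [Hy ->]]].
    assert (Hstep : forall w, phi w <= u (shift w) - u w).
    { intros w. assert (h := proj1 (Hlb _) (Hu w)). unfold phi. lra. }
    assert (forall n y, bsum phi n y <= u (itr n y) - u y).
    { induction n0; intros y0. simpl. lra. rewrite bsum_S_r. specialize (IHn0 y0).
      specialize (Hstep (itr n0 y0)). simpl. lra. }
    specialize (H n y). rewrite Hy in H. specialize (Hu0 y). lra.
  - intros V HV k Hk t Ht.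
    assert (HWV : forall m, (1 <= m)%nat -> forall x y : Sigma M, agree m x y -> A x - A y <= V m).
    { intros m Hm x y Ha. apply (proj1 (HV m Hm)). eauto. }
    assert (HVp : forall m, (1 <= m)%nat -> 0 <= V m).
    { intros m Hm. assert (H := HWV m Hm x0 x0 (fun _ _ => eq_refl)). lra. }
    assert (HT : forall n, fsum (fun j => V (k + 1 + j)%nat) n <= t).
    { intros n. assert (H := partial_le_lim (fun j => V (k + j)%nat) t ltac:(intros; apply HVp; lia) Ht (S n)).
      rewrite fsum_shift in H.
      rewrite (fsum_ext (fun i => V (k + S i)%nat) (fun j => V (k + 1 + j)%nat)) in H by (intros; f_equal; lia).
      assert (0 <= V (k + 0)%nat) by (apply HVp; lia). lra. }
    set (D := fun r => exists x y : Sigma M, agree k x y /\ r = uA x - uA y).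
    assert (HDb : forall r, D r -> r <= t).
    { intros r [x [y [Ha ->]]]. assert (H := Hdiff V k t Hk HWV HT x y Ha). lra. }
    destruct (completeness D ltac:(exists t; intros r Hr; auto) ltac:(exists 0; exists x0, x0; split; [intros ? ?; reflexivity|ring])) as [v Hv].
    exists v. split; auto. apply Hv. intros r Hr; auto.
Qed.
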